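(* Let $\mathcal{H}$ be a complex Hilbert space and $A,B,C,D\in\mathcal{B}(\mathcal{H})$. Then for every $0\le\alpha\le1$, $$\begin{aligned}w^4\left(\begin{bmatrix}A & B\\ C & D\end{bmatrix}\right)\le{}& 8\max\{w^4(A),w^4(D)\}+(1+\alpha)\max\left\{\big\||B|^4+|C^*|^4\big\|,\ \big\||B^*|^4+|C|^4\big\|\right\}\\&+2(1-\alpha)\max\{w^2(BC),w^2(CB)\}\\&+2\max\left\{\big\||B|^2+|C^*|^2\big\|,\ \big\||B^*|^2+|C|^2\big\|\right\}\cdot\max\{w(BC),w(CB)\}.\end{aligned}$$
   Context: $\mathcal{B}(\mathcal{H})$ is the algebra of bounded linear operators on $\mathcal{H}$ with operator norm $\|\cdot\|$. For $T\in\mathcal{B}(\mathcal{H})$, $T^*$ is the adjoint, $|T|=(T^*T)^{1/2}$, $|T^*|=(TT^* )^{1/2}$, and $w(T)=\sup_{\|x\|=1}|\langle Tx,x\rangle|$ is the numerical radius. The operator matrix $\begin{bmatrix}A&B\\C&D\end{bmatrix}$ acts on $\mathcal{H}\oplus\mathcal{H}$ by $(x_1,x_2)\mapsto(Ax_1+Bx_2,\,Cx_1+Dx_2)$. *)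

(* Defs.v *)
From HB Require Import structures.
From mathcomp Require Import all_boot all_order all_algebra.
From mathcomp Require Import boolp classical_sets reals.
From mathcomp.real_closed Require Import complex.
Set Implicit Arguments. Unset Strict Implicit. Unset Printing Implicit Defensive.
Import Order.TTheory GRing.Theory Num.Theory.
Local Open Scope ring_scope.

Definition is_inner_product (R : realType) (V : lmodType R[i])
  (ip : V -> V -> R[i]) : Prop :=
  [/\ (forall (a : R[i]) (x y z : V), ip (a *: x + y) z = a * ip x z + ip y z),
      (forall x y : V, ip y x = (ip x y)^*),
      (forall x : V, 0 <= ip x x) &
      (forall x : V, ip x x = 0 -> x = 0)].

Definition ipnorm (R : realType) (V : lmodType R[i]) (ip : V -> V -> R[i])
  (x : V) : R := Num.sqrt (complex.Re (ip x x)).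

Definition ip_complete (R : realType) (V : lmodType R[i]) (ip : V -> V -> R[i])
  : Prop :=
  forall u : nat -> V,
    (forall e : R, 0 < e -> exists N : nat, forall m n : nat,
        (N <= m)%N -> (N <= n)%N -> ipnorm ip (u m - u n) < e) ->
    exists l : V, forall e : R, 0 < e -> exists N : nat, forall n : nat,
        (N <= n)%N -> ipnorm ip (u n - l) < e.

Definition is_hilbert (R : realType) (V : lmodType R[i]) (ip : V -> V -> R[i])
  : Prop := is_inner_product ip /\ ip_complete ip.

Definition is_bounded_op (R : realType) (V : lmodType R[i])
  (ip : V -> V -> R[i]) (T : V -> V) : Prop :=
  linear T /\ exists M : R, forall x : V, ipnorm ip (T x) <= M * ipnorm ip x.

Definition is_adjoint (R : realType) (V : lmodType R[i])
  (ip : V -> V -> R[i]) (T Ts : V -> V) : Prop :=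
  forall x y : V, ip (T x) y = ip x (Ts y).

Definition opnorm (R : realType) (V : lmodType R[i]) (ip : V -> V -> R[i])
  (T : V -> V) : R :=
  reals.sup [set ipnorm ip (T x) | x in [set x | ipnorm ip x = 1]]%classic.

Definition numrad (R : realType) (V : lmodType R[i]) (ip : V -> V -> R[i])
  (T : V -> V) : R :=
  reals.sup [set Normc.normc (ip (T x) x) | x in [set x | ipnorm ip x = 1]]%classic.

Definition ip_sum (R : realType) (V : lmodType R[i]) (ip : V -> V -> R[i])
  (x y : V * V) : R[i] := ip x.1 y.1 + ip x.2 y.2.

Definition opmatrix (R : realType) (V : lmodType R[i]) (A B C D : V -> V)
  (x : V * V) : V * V := (A x.1 + B x.2, C x.1 + D x.2).

(** |T|^2 = T^* T, given the adjoint Ts of T. *)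
Definition absq (R : realType) (V : lmodType R[i]) (T Ts : V -> V) : V -> V :=
  fun x => Ts (T x).

Definition absq4 (R : realType) (V : lmodType R[i]) (T Ts : V -> V) : V -> V :=
  fun x => absq T Ts (absq T Ts x).

Definition opadd (R : realType) (V : lmodType R[i]) (S T : V -> V) : V -> V :=
  fun x => S x + T x.

(* Main.v *)
Require Import Defs.
From HB Require Import structures.
From mathcomp Require Import all_boot all_order all_algebra.
From mathcomp Require Import boolp classical_sets reals.
From mathcomp.real_closed Require Import complex.
From mathcomp Require Import ring lra.
Set Implicit Arguments. Unset Strict Implicit. Unset Printing Implicit Defensive.
Import Order.TTheory GRing.Theory Num.Theory.
Local Open Scope complex_scope.
Local Open Scope ring_scope.

Lemma le_sq (R : realDomainType) (a b : R) : 0 <= a -> 0 <= b -> a ^+ 2 <= b ^+ 2 -> a <= b.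
Proof. by move=> a0 b0; rewrite ler_sqr ?nnegE. Qed.

Lemma sup_ge0' (R : realType) (E : set R) : (forall y, E y -> 0 <= y) -> 0 <= sup E.
Proof.
move=> h; have [hs|hs] := pselect (has_sup E); last by rewrite sup_out.
case: hs => [[y Ey] hub]; apply: le_trans (h y Ey) _.
exact: (sup_upper_bound (conj (ex_intro _ y Ey) hub)).
Qed.

Lemma sup_le' (R : realType) (E : set R) M : 0 <= M -> (forall y, E y -> y <= M) -> sup E <= M.
Proof.
move=> M0 h; have [hs|hs] := pselect (has_sup E); last by rewrite sup_out.
case: hs => [ne _]; exact: ge_sup.
Qed.

Lemma le_sup' (R : realType) (E : set R) M y : (forall z, E z -> z <= M) -> E y -> y <= sup E.
Proof. by move=> h Ey; apply: ub_le_sup => //; exists M. Qed.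

Lemma final_arith (R : realFieldType) (t s rho N2 W N4 S4 W2 al : R) :
  0 <= t -> t <= s + rho -> 0 <= s -> 0 <= rho -> 4 * rho ^+ 2 = N2 + 2 * W ->
  2 * W <= N2 -> 0 <= W -> N2 ^+ 2 <= 2 * N4 -> s ^+ 4 <= S4 -> W ^+ 2 <= W2 ->
  0 <= al -> al <= 1 ->
  t ^+ 4 <= 8 * S4 + (1 + al) * N4 + 2 * (1 - al) * W2 + 2 * N2 * W.
Proof.
move=> t0 ts s0 r0 er WN W0 NN sS WW a0 a1.
have h1 : t ^+ 4 <= (s + rho) ^+ 4.
  by apply: lerXn2r => //; rewrite nnegrE ?addr_ge0.
have h2 : (s + rho) ^+ 4 <= 8 * s ^+ 4 + 8 * rho ^+ 4.
  have e : 8 * s ^+ 4 + 8 * rho ^+ 4 - (s + rho) ^+ 4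
         = (s - rho) ^+ 2 * (7 * s ^+ 2 + 10 * s * rho + 7 * rho ^+ 2) by ring.
  by rewrite -subr_ge0 e mulr_ge0 ?sqr_ge0 // !addr_ge0 ?mulr_ge0 ?sqr_ge0 //.
have e4 : 8 * rho ^+ 4 = (N2 + 2 * W) ^+ 2 / 2.
  have -> : rho ^+ 4 = (rho ^+ 2) ^+ 2 by rewrite -exprM.
  have -> : rho ^+ 2 = (N2 + 2 * W) / 4 by rewrite -er; field.
  by field.
have W2N : 2 * W ^+ 2 <= N4.
  have : (2 * W) ^+ 2 <= N2 ^+ 2 by apply: lerXn2r; rewrite ?nnegrE; lra.
  rewrite exprMn; lra.
have h3 : al * (2 * W ^+ 2) <= al * N4 by rewrite ler_wpM2l.
have h4 : (1 - al) * W ^+ 2 <= (1 - al) * W2 by rewrite ler_wpM2l // subr_ge0.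
rewrite e4 in h2.
have h5 : (N2 + 2 * W) ^+ 2 / 2 = N2 ^+ 2 / 2 + 2 * N2 * W + 2 * W ^+ 2 by field.
rewrite h5 in h2.
lra.
Qed.

Lemma unit_w (R : realType) (z : R[i]) : exists w : R[i], `|w| = 1 /\ w * z = `|z|.
Proof.
have [->|nz] := eqVneq z 0; first by exists 1; rewrite normr1 mulr0 normr0.
exists (`|z| / z); split.
  by rewrite normrM normfV normr_id divff // normr_eq0.
by rewrite divfK.
Qed.

Lemma maxl' (R : realType) (x y : R) : x <= Num.max x y.
Proof. by rewrite le_max lexx. Qed.
Lemma maxr' (R : realType) (x y : R) : y <= Num.max x y.
Proof. by rewrite le_max lexx orbT. Qed.
Lemma max_cases (R : realType) (x y : R) : Num.max x y = x \/ Num.max x y = y.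
Proof. by case: (leP x y) => _; [right|left]. Qed.

Section IP.
Variable R : realType.
Variable V : lmodType R[i].
Variable ip : V -> V -> R[i].
Hypothesis iP : is_inner_product ip.

Local Notation nn := (ipnorm ip).

Lemma ipDl x y z : ip (x + y) z = ip x z + ip y z.
Proof. by case: iP => h _ _ _; have := h 1 x y z; rewrite scale1r mul1r. Qed.

Lemma ip0l z : ip 0 z = 0.
Proof.
have h := ipDl 0 0 z; rewrite addr0 in h.
by apply: (addrI (ip 0 z)); rewrite addr0 -h.
Qed.

Lemma ipZl a x z : ip (a *: x) z = a * ip x z.
Proof. by case: iP => h _ _ _; have := h a x 0 z; rewrite addr0 ip0l addr0. Qed.

Lemma ipC x y : ip y x = (ip x y)^*.
Proof. by case: iP. Qed.

Lemma ipNl x z : ip (- x) z = - ip x z.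
Proof. by rewrite -scaleN1r ipZl mulN1r. Qed.

Lemma ipBl x y z : ip (x - y) z = ip x z - ip y z.
Proof. by rewrite ipDl ipNl. Qed.

Lemma ipDr x y z : ip z (x + y) = ip z x + ip z y.
Proof. by rewrite (ipC (x + y)) (ipC x) (ipC y) ipDl rmorphD. Qed.

Lemma ipZr a x z : ip z (a *: x) = a^* * ip z x.
Proof. by rewrite (ipC (a *: x)) (ipC x) ipZl rmorphM. Qed.

Lemma ipBr x y z : ip z (x - y) = ip z x - ip z y.
Proof. by rewrite ipDr (ipC (- y)) (ipC y) ipNl rmorphN. Qed.

Lemma ip0r z : ip z 0 = 0.
Proof. by rewrite ipC ip0l conjC0. Qed.

Lemma ip_ge0 x : 0 <= ip x x.
Proof. by case: iP => _ _ h _; apply: h. Qed.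

Lemma ip_eq0 x : ip x x = 0 -> x = 0.
Proof. by case: iP => _ _ _ h; apply: h. Qed.

Lemma nn_ge0 x : 0 <= nn x.
Proof. exact: sqrtr_ge0. Qed.

Lemma ipxxE x : ip x x = (nn x ^+ 2)%:C.
Proof.
have h := ip_ge0 x.
have hi := ger0_Im h.
have hr : 0 <= complex.Re (ip x x).
  by move: h; rewrite lecE /= => /andP[_].
rewrite /ipnorm sqr_sqrtr //.
by move: hi; case: (ip x x) => a b /= ->.
Qed.

Lemma nn0 : nn 0 = 0.
Proof. by rewrite /ipnorm ip0l /= sqrtr0. Qed.

Lemma nn_eq0 x : nn x = 0 -> x = 0.
Proof. by move=> h; apply: ip_eq0; rewrite ipxxE h expr0n. Qed.

Lemma CS2 x y : `|ip x y| ^+ 2 <= ip x x * ip y y.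
Proof.
have [->|y0] := eqVneq y 0.
  by rewrite ip0r normr0 expr0n /= ip0l mulr0.
set g := ip y y.
have g0 : g != 0 by apply/eqP => /ip_eq0; apply/eqP.
have gge : 0 <= g := ip_ge0 y.
have gJ : g^* = g by rewrite geC0_conj.
set p := ip x y.
set t := p / g.
have h := ip_ge0 (x - t *: y).
rewrite ipBl !ipBr !ipZl !ipZr -/g -/p (ipC x y) -/p in h.
have tJ : t^* = p^* / g.
    by rewrite /t rmorphM fmorphV /=; exact: (congr1 (fun u => p^* / u) gJ).
rewrite tJ in h.
have e : ip x x - p^* / g * p - (t * p^* - t * (p^* / g * g)) = ip x x - p * p^* / g.
  by rewrite /t; field.
rewrite e in h.
rewrite subr_ge0 in h.
rewrite normCK.
have gp : 0 < g by rewrite lt_def g0.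
by rewrite -ler_pdivrMr.
Qed.

Lemma normc_ge0 (z : R[i]) : 0 <= Normc.normc z.
Proof. by case: z => a b; exact: sqrtr_ge0. Qed.

Lemma normcE (z : R[i]) : `|z| = (Normc.normc z)%:C.
Proof. by []. Qed.

Lemma CS x y : Normc.normc (ip x y) <= nn x * nn y.
Proof.
have h := CS2 x y; rewrite normcE !ipxxE -!rmorphXn -rmorphM lecR in h.
apply: le_sq; rewrite ?mulr_ge0 ?nn_ge0 ?normc_ge0 //.
by rewrite exprMn.
Qed.

Lemma nn_eq x r : 0 <= r -> ip x x = (r ^+ 2)%:C -> nn x = r.
Proof. by move=> r0 e; rewrite /ipnorm e /= sqrtr_sqr ger0_norm. Qed.

Lemma ReC_le (z : R[i]) : z + z^* <= 2 * `|z|.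
Proof.
have h := (leif_Re_Creal z).1.
have e : z + z^* = 2 * 'Re z by rewrite ReE; field.
by rewrite e ler_pM2l.
Qed.

Lemma nnD x y : nn (x + y) <= nn x + nn y.
Proof.
have e : ip (x + y) (x + y) = ip x x + ip y y + (ip x y + (ip x y)^*).
  by rewrite ipDl !ipDr -(ipC x y); ring.
have h1 := ReC_le (ip x y).
have h2 := CS x y.
have h : ip (x + y) (x + y) <= ((nn x + nn y) ^+ 2)%:C.
  rewrite e !ipxxE; apply: le_trans; first by apply: lerD; [exact: lexx| exact: h1].
  rewrite normcE.
  have -> : (nn x ^+ 2)%:C + (nn y ^+ 2)%:C + 2 * (Normc.normc (ip x y))%:C = (nn x ^+ 2 + nn y ^+ 2 + 2 * Normc.normc (ip x y))%:C.
    by simpc.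
  rewrite lecR.
  rewrite sqrrD; nra.
rewrite ipxxE lecR in h.
by apply: le_sq; rewrite ?addr_ge0 ?nn_ge0.
Qed.

Lemma normc2 : Normc.normc (2 : R[i]) = 2.
Proof. by rewrite normcMn Normc.normc1. Qed.

Lemma nnZ c x : nn (c *: x) = Normc.normc c * nn x.
Proof.
apply: nn_eq; first by rewrite mulr_ge0 ?normc_ge0 ?nn_ge0.
rewrite ipZl ipZr ipxxE mulrA -normCK normcE.
by rewrite -rmorphXn -rmorphM exprMn.
Qed.

Lemma buzano a b g : ip g g = 1 ->
  2 * Normc.normc (ip a g * ip g b) <= nn a * nn b + Normc.normc (ip a b).
Proof.
move=> g1.
set k := ip a g.
set v := (2 * k) *: g - a.
have evv : ip v v = ip a a.
  have c2 : (2 * k)^* = 2 * k^* by rewrite rmorphM rmorph_nat.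
  rewrite /v !ipBl !ipBr !ipZl !ipZr g1 (ipC a g) -/k c2.
  ring.
have nv : nn v = nn a by apply: nn_eq; rewrite ?nn_ge0 // evv ipxxE.
have e : 2 * (k * ip g b) = ip v b + ip a b.
  by rewrite /v ipBl ipZl; ring.
rewrite -normc2 -Normc.normcM e.
apply: le_trans; first exact: le_normcD.
by rewrite lerD2r -nv CS.
Qed.

Lemma normc_real (r : R) : 0 <= r -> Normc.normc (r%:C) = r.
Proof. by move=> r0; rewrite /Normc.normc /= expr0n /= addr0 sqrtr_sqr ger0_norm. Qed.

Lemma normcJ' (z : R[i]) : Normc.normc (z^*) = Normc.normc z.
Proof. by apply: complexI; rewrite -!normcE normcJ. Qed.

Definition hom (T : V -> V) := forall c x, T (c *: x) = c *: T x.
Definition bnd (T : V -> V) := exists2 M, 0 <= M & forall x, nn (T x) <= M * nn x.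

Lemma bounded_bnd T : is_bounded_op ip T -> bnd T.
Proof.
case=> _ [M hM]; exists `|M|; first exact: normr_ge0.
move=> x; apply: le_trans (hM x) _.
by rewrite ler_wpM2r ?nn_ge0 ?real_ler_norm ?num_real.
Qed.

Lemma bounded_hom T : is_bounded_op ip T -> hom T.
Proof.
case=> lin _ c x.
have h0 : T 0 = 0.
  have := lin 1 0 0; rewrite scaler0 addr0 scale1r => h.
  by apply: (addrI (T 0)); rewrite addr0 -h.
by have := lin c x 0; rewrite addr0 h0 addr0.
Qed.

Lemma hom0 T : hom T -> T 0 = 0.
Proof. by move=> h; have := h 0 0; rewrite !scale0r. Qed.

Lemma adj_sym T Ts : is_adjoint ip T Ts -> is_adjoint ip Ts T.
Proof. by move=> h x y; rewrite ipC -h -ipC. Qed.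

Lemma adj_hom T Ts : is_adjoint ip T Ts -> hom Ts.
Proof.
move=> h c y; set d := Ts (c *: y) - c *: Ts y.
apply/eqP; rewrite -subr_eq0; apply/eqP; apply: ip_eq0.
rewrite -/d {2}/d ipBr ipZr -!h ipZr; ring.
Qed.

Lemma adj_bnd T Ts : is_adjoint ip T Ts -> bnd T -> bnd Ts.
Proof.
move=> h [M M0 hM]; exists M => // y.
have e : (nn (Ts y) ^+ 2)%:C = ip (T (Ts y)) y by rewrite h ipxxE.
have e2 : nn (Ts y) ^+ 2 = Normc.normc (ip (T (Ts y)) y).
  by rewrite -e normc_real // sqr_ge0.
have h1 := CS (T (Ts y)) y.
have h2 := hM (Ts y).
have g1 := nn_ge0 (Ts y); have g2 := nn_ge0 y; have g3 := nn_ge0 (T (Ts y)).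
rewrite -e2 in h1.
have h3 : nn (Ts y) * nn (Ts y) <= (M * nn y) * nn (Ts y).
  rewrite -expr2; apply: le_trans h1 _; rewrite mulrAC ler_wpM2r //.
have [->|gt] := eqVneq (nn (Ts y)) 0; first by rewrite mulr_ge0.
by rewrite -(ler_pM2r (_ : 0 < nn (Ts y))) // lt_def gt.
Qed.

Lemma bnd_comp S T : bnd S -> bnd T -> bnd (S \o T).
Proof.
move=> [M M0 hM] [N N0 hN]; exists (M * N); first exact: mulr_ge0.
move=> x /=; apply: le_trans (hM _) _; rewrite -mulrA ler_wpM2l //.
Qed.

Lemma bnd_add S T : bnd S -> bnd T -> bnd (opadd S T).
Proof.
move=> [M M0 hM] [N N0 hN]; exists (M + N); first exact: addr_ge0.
move=> x; rewrite /opadd; apply: le_trans (nnD _ _) _.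
by rewrite mulrDl lerD.
Qed.

Lemma hom_comp S T : hom S -> hom T -> hom (S \o T).
Proof. by move=> hS hT c x /=; rewrite hT hS. Qed.

Lemma hom_add S T : hom S -> hom T -> hom (opadd S T).
Proof. by move=> hS hT c x; rewrite /opadd hS hT scalerDr. Qed.

Lemma opnorm_ge0 T : 0 <= opnorm ip T.
Proof. by apply: sup_ge0' => y [x _ <-]; exact: nn_ge0. Qed.

Lemma numrad_ge0 T : 0 <= numrad ip T.
Proof. by apply: sup_ge0' => y [x _ <-]; exact: normc_ge0. Qed.

Lemma opnorm_le T M : 0 <= M -> (forall x, nn x = 1 -> nn (T x) <= M) -> opnorm ip T <= M.
Proof. by move=> M0 h; apply: sup_le' => // y [x hx <-]; exact: h. Qed.

Lemma numrad_le T M : 0 <= M -> (forall x, nn x = 1 -> Normc.normc (ip (T x) x) <= M) ->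
  numrad ip T <= M.
Proof. by move=> M0 h; apply: sup_le' => // y [x hx <-]; exact: h. Qed.

Lemma unit_scale x : nn x != 0 -> nn (((nn x)^-1)%:C *: x) = 1.
Proof.
move=> nz; rewrite nnZ normc_real ?invr_ge0 ?nn_ge0 //.
by rewrite mulVf.
Qed.

Lemma le_opnorm T : hom T -> bnd T -> forall x, nn (T x) <= opnorm ip T * nn x.
Proof.
move=> hT [M M0 hM] x.
have [e|nz] := eqVneq (nn x) 0.
  by rewrite (nn_eq0 e) hom0 // nn0 mulr0.
have xp : 0 < nn x by rewrite lt_def nz nn_ge0.
set u := ((nn x)^-1)%:C *: x.
have hu : nn (T u) <= opnorm ip T.
  apply: (@le_sup' _ _ M).
    by move=> z [y hy <-]; apply: le_trans (hM y) _; rewrite hy mulr1.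
  by exists u => //; exact: unit_scale.
rewrite /u hT nnZ normc_real ?invr_ge0 ?nn_ge0 // in hu.
by rewrite -ler_pdivrMr // mulrC.
Qed.

Lemma le_numrad T : hom T -> bnd T -> forall x,
  Normc.normc (ip (T x) x) <= numrad ip T * nn x ^+ 2.
Proof.
move=> hT [M M0 hM] x.
have [e|nz] := eqVneq (nn x) 0.
  by rewrite (nn_eq0 e) hom0 // ip0l nn0 expr0n mulr0 Normc.normc0.
have xp : 0 < nn x by rewrite lt_def nz nn_ge0.
set c := ((nn x)^-1)%:C.
set u := c *: x.
have hu : Normc.normc (ip (T u) u) <= numrad ip T.
  apply: (@le_sup' _ _ M).
    move=> z [y hy <-]; apply: le_trans (CS _ _) _; rewrite hy mulr1.
    by apply: le_trans (hM y) _; rewrite hy mulr1.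
  by exists u => //; exact: unit_scale.
rewrite /u hT ipZl ipZr !Normc.normcM normcJ' /c normc_real ?invr_ge0 ?nn_ge0 // in hu.
rewrite -ler_pdivrMr ?exprn_gt0 // mulrC.
by rewrite expr2 invfM -mulrA.
Qed.

Lemma conj_real (r : R) : 0 <= r -> (r%:C)^* = r%:C.
Proof. by move=> r0; rewrite geC0_conj // ler0c. Qed.

Lemma G1 T Ts x : is_adjoint ip T Ts -> ip (absq T Ts x) x = (nn (T x) ^+ 2)%:C.
Proof. by move=> h; rewrite /absq ipC -h ipxxE conj_real // sqr_ge0. Qed.

Lemma G2 T Ts x : is_adjoint ip T Ts ->
  ip (absq4 T Ts x) x = (nn (absq T Ts x) ^+ 2)%:C.
Proof.
move=> h; have hs := adj_sym h.
by rewrite /absq4 /absq hs ipC -hs ipxxE conj_real // sqr_ge0.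
Qed.

Lemma quad_le P y r : hom P -> bnd P -> 0 <= r -> ip (P y) y = r%:C ->
  r <= opnorm ip P * nn y ^+ 2.
Proof.
move=> hP bP r0 e.
have -> : r = Normc.normc (ip (P y) y) by rewrite e normc_real.
apply: le_trans (CS _ _) _.
by rewrite expr2 mulrA ler_wpM2r ?nn_ge0 ?le_opnorm.
Qed.
End IP.

Section Sum.
Variable R : realType.
Variable V : lmodType R[i].
Variable ip : V -> V -> R[i].
Hypothesis iP : is_inner_product ip.

Lemma ip_sum_ip : is_inner_product (ip_sum ip).
Proof.
split.
- move=> a [x1 x2] [y1 y2] [z1 z2]; rewrite /ip_sum /=.
  rewrite !(ipDl iP) !(ipZl iP); ring.
- by move=> [x1 x2] [y1 y2]; rewrite /ip_sum /= (ipC iP x1 y1) (ipC iP x2 y2) rmorphD.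
- by move=> [x1 x2]; rewrite /ip_sum /= addr_ge0 ?(ip_ge0 iP).
- move=> [x1 x2]; rewrite /ip_sum /= => /eqP.
  rewrite paddr_eq0 ?(ip_ge0 iP) // => /andP[/eqP/(ip_eq0 iP) -> /eqP/(ip_eq0 iP) ->].
  by [].
Qed.

Lemma nn_sum x1 x2 : ipnorm (ip_sum ip) (x1, x2) ^+ 2 =
  ipnorm ip x1 ^+ 2 + ipnorm ip x2 ^+ 2.
Proof.
apply: complexI.
rewrite -(ipxxE ip_sum_ip) /ip_sum /= !(ipxxE iP).
by rewrite rmorphD.
Qed.
End Sum.

Section Main.
Variables (R : realType) (H : lmodType R[i]) (ip : H -> H -> R[i]).
Variables (A B C D Bs Cs : H -> H).
Hypothesis iP : is_inner_product ip.
Hypotheses (bA : is_bounded_op ip A) (bB : is_bounded_op ip B)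
  (bC : is_bounded_op ip C) (bD : is_bounded_op ip D).
Hypotheses (aB : is_adjoint ip B Bs) (aC : is_adjoint ip C Cs).

Local Notation nn := (ipnorm ip).

Let aBs := adj_sym iP aB.
Let aCs := adj_sym iP aC.
Let hA := bounded_hom bA.
Let hB := bounded_hom bB.
Let hC := bounded_hom bC.
Let hD := bounded_hom bD.
Let hBs := adj_hom iP aB.
Let hCs := adj_hom iP aC.
Let nA := bounded_bnd bA.
Let nB := bounded_bnd bB.
Let nC := bounded_bnd bC.
Let nD := bounded_bnd bD.
Let nBs := adj_bnd iP aB nB.
Let nCs := adj_bnd iP aC nC.

Definition Pa := opadd (absq B Bs) (absq Cs C).
Definition Pb := opadd (absq Bs B) (absq C Cs).
Definition Qa := opadd (absq4 B Bs) (absq4 Cs C).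
Definition Qb := opadd (absq4 Bs B) (absq4 C Cs).

Let hPa : hom Pa := hom_add (hom_comp hBs hB) (hom_comp hC hCs).
Let hPb : hom Pb := hom_add (hom_comp hB hBs) (hom_comp hCs hC).
Let nPa : bnd ip Pa := bnd_add iP (bnd_comp nBs nB) (bnd_comp nC nCs).
Let nPb : bnd ip Pb := bnd_add iP (bnd_comp nB nBs) (bnd_comp nCs nC).
Let hQa : hom Qa := hom_add (hom_comp (hom_comp hBs hB) (hom_comp hBs hB))
   (hom_comp (hom_comp hC hCs) (hom_comp hC hCs)).
Let hQb : hom Qb := hom_add (hom_comp (hom_comp hB hBs) (hom_comp hB hBs))
   (hom_comp (hom_comp hCs hC) (hom_comp hCs hC)).
Let nQa : bnd ip Qa := bnd_add iP (bnd_comp (bnd_comp nBs nB) (bnd_comp nBs nB))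
   (bnd_comp (bnd_comp nC nCs) (bnd_comp nC nCs)).
Let nQb : bnd ip Qb := bnd_add iP (bnd_comp (bnd_comp nB nBs) (bnd_comp nB nBs))
   (bnd_comp (bnd_comp nCs nC) (bnd_comp nCs nC)).


Lemma Pa_quad y : nn (B y) ^+ 2 + nn (Cs y) ^+ 2 <= opnorm ip Pa * nn y ^+ 2.
Proof.
apply: (quad_le iP hPa nPa); first by rewrite addr_ge0 ?sqr_ge0.
by rewrite /Pa /opadd (ipDl iP) (G1 iP _ aB) (G1 iP _ aCs) rmorphD.
Qed.

Lemma Pb_quad y : nn (Bs y) ^+ 2 + nn (C y) ^+ 2 <= opnorm ip Pb * nn y ^+ 2.
Proof.
apply: (quad_le iP hPb nPb); first by rewrite addr_ge0 ?sqr_ge0.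
by rewrite /Pb /opadd (ipDl iP) (G1 iP _ aBs) (G1 iP _ aC) rmorphD.
Qed.

Lemma wBC_le : 2 * numrad ip (B \o C) <= opnorm ip Pb.
Proof.
suff : numrad ip (B \o C) <= opnorm ip Pb / 2 by move=> h; lra.
apply: numrad_le; first by rewrite divr_ge0 ?opnorm_ge0.
move=> y y1 /=; rewrite aB.
have h1 := CS iP (C y) (Bs y).
have h2 := Pb_quad y; rewrite y1 expr1n mulr1 in h2.
have h3 : 2 * (nn (C y) * nn (Bs y)) <= nn (C y) ^+ 2 + nn (Bs y) ^+ 2.
  have := sqr_ge0 (nn (C y) - nn (Bs y)); rewrite sqrrB; lra.
lra.
Qed.

Lemma wCB_le : 2 * numrad ip (C \o B) <= opnorm ip Pa.
Proof.
suff : numrad ip (C \o B) <= opnorm ip Pa / 2 by move=> h; lra.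
apply: numrad_le; first by rewrite divr_ge0 ?opnorm_ge0.
move=> y y1 /=; rewrite aC.
have h1 := CS iP (B y) (Cs y).
have h2 := Pa_quad y; rewrite y1 expr1n mulr1 in h2.
have h3 : 2 * (nn (B y) * nn (Cs y)) <= nn (B y) ^+ 2 + nn (Cs y) ^+ 2.
  have := sqr_ge0 (nn (B y) - nn (Cs y)); rewrite sqrrB; lra.
lra.
Qed.

Lemma N2a_le : opnorm ip Pa ^+ 2 <= 2 * opnorm ip Qa.
Proof.
have N0 := opnorm_ge0 ip Qa.
have s0 : 0 <= Num.sqrt (2 * opnorm ip Qa) by exact: sqrtr_ge0.
suff h : opnorm ip Pa <= Num.sqrt (2 * opnorm ip Qa).
  have e : Num.sqrt (2 * opnorm ip Qa) ^+ 2 = 2 * opnorm ip Qa by rewrite sqr_sqrtr // mulr_ge0.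
  have a0 := opnorm_ge0 ip Pa.
  rewrite -e; nra.
apply: opnorm_le => // x x1.
set u := absq B Bs x; set v := absq Cs C x.
have hr : nn u ^+ 2 + nn v ^+ 2 <= opnorm ip Qa * nn x ^+ 2.
  apply: (quad_le iP hQa nQa); first by rewrite addr_ge0 ?sqr_ge0.
  by rewrite /Qa /opadd (ipDl iP) (G2 iP _ aB) (G2 iP _ aCs) rmorphD.
rewrite x1 expr1n mulr1 in hr.
have ht : nn (Pa x) <= nn u + nn v := nnD iP u v.
apply: le_sq => //; first exact: nn_ge0.
rewrite [X in _ <= X]sqr_sqrtr ?mulr_ge0 //.
have g1 := nn_ge0 ip u; have g2 := nn_ge0 ip v; have g3 := nn_ge0 ip (Pa x).
have h4 : nn (Pa x) ^+ 2 <= (nn u + nn v) ^+ 2.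
  nra.
have h5 : (nn u + nn v) ^+ 2 <= 2 * (nn u ^+ 2 + nn v ^+ 2).
  have := sqr_ge0 (nn u - nn v); rewrite sqrrB sqrrD; lra.
lra.
Qed.

Lemma N2b_le : opnorm ip Pb ^+ 2 <= 2 * opnorm ip Qb.
Proof.
have N0 := opnorm_ge0 ip Qb.
have s0 : 0 <= Num.sqrt (2 * opnorm ip Qb) by exact: sqrtr_ge0.
suff h : opnorm ip Pb <= Num.sqrt (2 * opnorm ip Qb).
  have e : Num.sqrt (2 * opnorm ip Qb) ^+ 2 = 2 * opnorm ip Qb by rewrite sqr_sqrtr // mulr_ge0.
  have a0 := opnorm_ge0 ip Pb.
  rewrite -e; nra.
apply: opnorm_le => // x x1.
set u := absq Bs B x; set v := absq C Cs x.
have hr : nn u ^+ 2 + nn v ^+ 2 <= opnorm ip Qb * nn x ^+ 2.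
  apply: (quad_le iP hQb nQb); first by rewrite addr_ge0 ?sqr_ge0.
  by rewrite /Qb /opadd (ipDl iP) (G2 iP _ aBs) (G2 iP _ aC) rmorphD.
rewrite x1 expr1n mulr1 in hr.
have ht : nn (Pb x) <= nn u + nn v := nnD iP u v.
apply: le_sq => //; first exact: nn_ge0.
rewrite [X in _ <= X]sqr_sqrtr ?mulr_ge0 //.
have g1 := nn_ge0 ip u; have g2 := nn_ge0 ip v; have g3 := nn_ge0 ip (Pb x).
have h4 : nn (Pb x) ^+ 2 <= (nn u + nn v) ^+ 2.
  nra.
have h5 : (nn u + nn v) ^+ 2 <= 2 * (nn u ^+ 2 + nn v ^+ 2).
  have := sqr_ge0 (nn u - nn v); rewrite sqrrB sqrrD; lra.
lra.
Qed.

Definition N2 := Num.max (opnorm ip Pa) (opnorm ip Pb).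
Definition W := Num.max (numrad ip (B \o C)) (numrad ip (C \o B)).

Lemma key x1 x2 : nn x1 ^+ 2 + nn x2 ^+ 2 = 1 ->
  2 * (Normc.normc (ip (B x2) x1) + Normc.normc (ip (C x1) x2)) ^+ 2 <= N2 / 2 + W.
Proof.
move=> hn.
have iP2 := ip_sum_ip iP.
set p := ip (B x2) x1; set q := ip (C x1) x2.
set r := Normc.normc p + Normc.normc q.
have [w1 [hw1 ew1]] := unit_w p.
have [w2 [hw2 ew2]] := unit_w q.
have ww1 : w1^* * w1 = 1 by rewrite mulrC -normCK hw1 expr1n.
have ww2 : w2^* * w2 = 1 by rewrite mulrC -normCK hw2 expr1n.
pose g : (H * H)%type := (w1^* *: x1, w2^* *: x2).
pose a : (H * H)%type := (B x2, C x1).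
pose b : (H * H)%type := (Cs x2, Bs x1).
have hg : ip_sum ip g g = 1.
  rewrite /ip_sum /= !(ipZl iP) !(ipZr iP) !conjCK !mulrA ww1 ww2 !mul1r.
  rewrite !(ipxxE iP) -rmorphD hn.
  by [].
have hag : ip_sum ip a g = `|p| + `|q|.
  by rewrite /ip_sum /= !(ipZr iP) !conjCK -/p -/q ew1 ew2.
have hgb : ip_sum ip g b = w1^* * q + w2^* * p.
  rewrite /ip_sum /= !(ipZl iP) -aC -aB.
  by [].
have hr : Normc.normc (ip_sum ip a g * ip_sum ip g b) = r * r.
  rewrite Normc.normcM hag hgb.
  have -> : w1^* * q + w2^* * p = w1^* * w2^* * (`|p| + `|q|).
    rewrite -ew1 -ew2.
    have e1 : w1^* * q + w2^* * p = w1^* * (w2^* * w2) * q + w2^* * (w1^* * w1) * p.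
      by rewrite ww1 ww2 !mulr1.
    rewrite e1; ring.
  have nr : Normc.normc (`|p| + `|q|) = r.
    by rewrite !normcE -rmorphD normc_real // addr_ge0 ?normc_ge0.
  have n1 : Normc.normc w1 = 1 by apply: complexI; rewrite -normcE hw1.
  have n2 : Normc.normc w2 = 1 by apply: complexI; rewrite -normcE hw2.
  by rewrite !Normc.normcM !normcJ' n1 n2 nr !mul1r.
have hbz := buzano iP2 a b hg.
rewrite hr in hbz.
have na : ipnorm (ip_sum ip) a ^+ 2 = nn (B x2) ^+ 2 + nn (C x1) ^+ 2 by exact: nn_sum.
have nb : ipnorm (ip_sum ip) b ^+ 2 = nn (Cs x2) ^+ 2 + nn (Bs x1) ^+ 2 by exact: nn_sum.
have hab : ip_sum ip a b = ip ((C \o B) x2) x2 + ip ((B \o C) x1) x1.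
  by rewrite /ip_sum /= -aC -aB.
have hCB := le_numrad iP (hom_comp hC hB) (bnd_comp nC nB) x2.
have hBC := le_numrad iP (hom_comp hB hC) (bnd_comp nB nC) x1.
have nab : Normc.normc (ip_sum ip a b) <= W.
  rewrite hab; apply: le_trans; first exact: le_normcD.
  have m1 := maxl' (numrad ip (B \o C)) (numrad ip (C \o B)).
  have m2 := maxr' (numrad ip (B \o C)) (numrad ip (C \o B)).
  rewrite -/W in m1 m2.
  have g1 := sqr_ge0 (nn x1); have g2 := sqr_ge0 (nn x2).
  have k1 : numrad ip (C \o B) * nn x2 ^+ 2 <= W * nn x2 ^+ 2 by rewrite ler_wpM2r.
  have k2 : numrad ip (B \o C) * nn x1 ^+ 2 <= W * nn x1 ^+ 2 by rewrite ler_wpM2r.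
  have : W * nn x2 ^+ 2 + W * nn x1 ^+ 2 = W by rewrite -mulrDr addrC hn mulr1.
  lra.
have qa := Pa_quad x2.
have qb := Pb_quad x1.
have nab2 : ipnorm (ip_sum ip) a * ipnorm (ip_sum ip) b <=
   (ipnorm (ip_sum ip) a ^+ 2 + ipnorm (ip_sum ip) b ^+ 2) / 2.
  have := sqr_ge0 (ipnorm (ip_sum ip) a - ipnorm (ip_sum ip) b); rewrite sqrrB; lra.
have m1 := maxl' (opnorm ip Pa) (opnorm ip Pb).
have m2 := maxr' (opnorm ip Pa) (opnorm ip Pb).
rewrite -/N2 in m1 m2.
have g1 := sqr_ge0 (nn x1); have g2 := sqr_ge0 (nn x2).
have k1 : opnorm ip Pa * nn x2 ^+ 2 <= N2 * nn x2 ^+ 2 by rewrite ler_wpM2r.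
have k2 : opnorm ip Pb * nn x1 ^+ 2 <= N2 * nn x1 ^+ 2 by rewrite ler_wpM2r.
have : N2 * nn x2 ^+ 2 + N2 * nn x1 ^+ 2 = N2 by rewrite -mulrDr addrC hn mulr1.
rewrite expr2.
lra.
Qed.

Lemma N2_ge0 : 0 <= N2.
Proof. exact: le_trans (opnorm_ge0 ip Pa) (maxl' _ _). Qed.
Lemma W_ge0 : 0 <= W.
Proof. exact: le_trans (numrad_ge0 ip (B \o C)) (maxl' _ _). Qed.

Lemma pointwise x : ipnorm (ip_sum ip) x = 1 ->
  Normc.normc (ip_sum ip (opmatrix A B C D x) x) <=
  Num.max (numrad ip A) (numrad ip D) + Num.sqrt ((N2 + 2 * W) / 4).
Proof.
case: x => x1 x2 hx.
have hn : nn x1 ^+ 2 + nn x2 ^+ 2 = 1 by rewrite -nn_sum // hx expr1n.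
have e : ip_sum ip (opmatrix A B C D (x1, x2)) (x1, x2) =
   (ip (A x1) x1 + ip (D x2) x2) + (ip (B x2) x1 + ip (C x1) x2).
  by rewrite /ip_sum /opmatrix /= !(ipDl iP); ring.
rewrite e; apply: le_trans; first exact: le_normcD.
apply: lerD.
  apply: le_trans; first exact: le_normcD.
  have hA1 := le_numrad iP hA nA x1.
  have hD1 := le_numrad iP hD nD x2.
  have m1 := maxl' (numrad ip A) (numrad ip D).
  have m2 := maxr' (numrad ip A) (numrad ip D).
  set s := Num.max (numrad ip A) (numrad ip D) in m1 m2 *.
  have g1 := sqr_ge0 (nn x1); have g2 := sqr_ge0 (nn x2).
  have k1 : numrad ip A * nn x1 ^+ 2 <= s * nn x1 ^+ 2 by rewrite ler_wpM2r.
  have k2 : numrad ip D * nn x2 ^+ 2 <= s * nn x2 ^+ 2 by rewrite ler_wpM2r.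
  have : s * nn x1 ^+ 2 + s * nn x2 ^+ 2 = s by rewrite -mulrDr hn mulr1.
  lra.
apply: le_trans; first exact: le_normcD.
have hk := key hn.
have N0 := N2_ge0; have W0 := W_ge0.
apply: le_sq; rewrite ?addr_ge0 ?normc_ge0 ?sqrtr_ge0 //.
rewrite sqr_sqrtr; last by rewrite divr_ge0 ?addr_ge0 ?mulr_ge0.
lra.
Qed.

Lemma main_sec (alpha : R) : 0 <= alpha <= 1 ->
  numrad (ip_sum ip) (opmatrix A B C D) ^+ 4 <=
    8 * Num.max (numrad ip A ^+ 4) (numrad ip D ^+ 4)
  + (1 + alpha) * Num.max (opnorm ip (opadd (absq4 B Bs) (absq4 Cs C)))
                          (opnorm ip (opadd (absq4 Bs B) (absq4 C Cs)))
  + 2 * (1 - alpha) * Num.max (numrad ip (B \o C) ^+ 2) (numrad ip (C \o B) ^+ 2)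
  + 2 * Num.max (opnorm ip (opadd (absq B Bs) (absq Cs C)))
                (opnorm ip (opadd (absq Bs B) (absq C Cs)))
      * Num.max (numrad ip (B \o C)) (numrad ip (C \o B)).
Proof.
move=> /andP[a0 a1].
have N0 := N2_ge0; have W0 := W_ge0.
have s0 : 0 <= Num.max (numrad ip A) (numrad ip D).
  exact: le_trans (numrad_ge0 ip A) (maxl' _ _).
have q0 : 0 <= (N2 + 2 * W) / 4 by rewrite divr_ge0 ?addr_ge0 ?mulr_ge0.
apply: (@final_arith R _ (Num.max (numrad ip A) (numrad ip D)) (Num.sqrt ((N2 + 2 * W) / 4))
          N2 W) => //.
- exact: numrad_ge0.
- apply: numrad_le; first by rewrite addr_ge0 ?sqrtr_ge0.
  exact: pointwise.
- exact: sqrtr_ge0.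
- by rewrite sqr_sqrtr //; field.
- rewrite /W.
  case: (max_cases (numrad ip (B \o C)) (numrad ip (C \o B))) => ->.
    exact: le_trans wBC_le (maxr' _ _).
  exact: le_trans wCB_le (maxl' _ _).
- rewrite /N2.
  case: (max_cases (opnorm ip Pa) (opnorm ip Pb)) => ->.
    apply: le_trans N2a_le _; rewrite ler_wpM2l //; exact: maxl'.
  apply: le_trans N2b_le _; rewrite ler_wpM2l //; exact: maxr'.
- case: (max_cases (numrad ip A) (numrad ip D)) => ->.
    exact: maxl'.
  exact: maxr'.
- rewrite /W.
  case: (max_cases (numrad ip (B \o C)) (numrad ip (C \o B))) => ->.
    exact: maxl'.
  exact: maxr'.
Qed.
End Main.

Unset Implicit Arguments.
Local Close Scope complex_scope.

Theorem mainTheorem12 (R : realType) (H : lmodType R[i]) (ip : H -> H -> R[i])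
  (A B C D Bs Cs : H -> H) (alpha : R) :
  is_hilbert ip ->
  is_bounded_op ip A -> is_bounded_op ip B ->
  is_bounded_op ip C -> is_bounded_op ip D ->
  is_adjoint ip B Bs ->
  is_adjoint ip C Cs ->
  0 <= alpha <= 1 ->
  numrad (ip_sum ip) (opmatrix A B C D) ^+ 4 <=
    8 * Num.max (numrad ip A ^+ 4) (numrad ip D ^+ 4)
  + (1 + alpha) * Num.max (opnorm ip (opadd (absq4 B Bs) (absq4 Cs C)))
                          (opnorm ip (opadd (absq4 Bs B) (absq4 C Cs)))
  + 2 * (1 - alpha) * Num.max (numrad ip (B \o C) ^+ 2) (numrad ip (C \o B) ^+ 2)
  + 2 * Num.max (opnorm ip (opadd (absq B Bs) (absq Cs C)))
                (opnorm ip (opadd (absq Bs B) (absq C Cs)))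
      * Num.max (numrad ip (B \o C)) (numrad ip (C \o B)).
Proof.
move=> [iP _] bA bB bC bD aB aC ha.
exact: main_sec.
Qed.
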